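(* Under the hypotheses of the context with $\nu_0=0$, $\nu_1=\nu$, $x_0(s)\neq0$ and $s^{-\nu}y_1(s)/x_0(s)\to1$ as $s\to0^+$, define functions $q,p,u,v$ of $t>0$ by $t=4s$ and $$x_0(s)=i s^{-\nu/2}q(t),\quad y_0(s)=i s^{\nu/2}\big(p(t)-\tfrac{\nu}{2}q(t)\big),\quad \eta_0(s)=-\tfrac14u(t),\quad \xi_0(s)=\tfrac14\big(-v(t)+\tfrac{\nu}{2}u(t)\big).$$ Then, with $\dot{}=d/dt$, $$tq^2=\tfrac14u^2+u+2v,\qquad u=4p^2-(\nu^2-t+2v)q^2+2qpu,\qquad \dot u=q^2,\qquad \dot v=qp,$$ $$t\dot q=p+\tfrac14qu,\qquad t\dot p=\big(\tfrac14\nu^2-\tfrac14t+\tfrac12v\big)q-\tfrac14pu .$$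
   Context: Fix complex parameters $\nu_0,\nu_1$ and put $e_1=\nu_0+\nu_1$, $e_2=\nu_0\nu_1$. Let $x_0,x_1,y_0,y_1,\xi_0,\xi_1,\eta_0,\eta_1$ be smooth complex-valued functions of $s\in(0,\infty)$ satisfying, with $'=d/ds$, the system $s x_0'=-\eta_0x_0-x_1$, $s x_1'=-\eta_1x_0+sx_0+\xi_0x_0+\xi_1x_1$, $s y_1'=-\xi_1y_1+y_0$, $s y_0'=-\xi_0y_1-sy_1+\eta_0y_0+\eta_1y_1$, $\xi_0'=x_0y_0$, $\xi_1'=x_0y_1$, $\eta_0'=x_0y_1$, $\eta_1'=x_1y_1$, together with the boundary behaviour as $s\to0^+$: $\xi_0\to e_2$, $\xi_1\to-e_1$, $\eta_0\to0$, $\eta_1\to0$, and $x_j(s)y_k(s)\to0$ for all $j,k\in\{0,1\}$. *)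

(* Defs.v *)
From Stdlib Require Import Reals.
Open Scope R_scope.

Definition Cplx : Type := (R * R)%type.
Definition Re (z : Cplx) : R := fst z.
Definition Im (z : Cplx) : R := snd z.
Definition RtoC (r : R) : Cplx := (r, 0).
Definition Ci : Cplx := (0, 1).
Definition Cadd (z w : Cplx) : Cplx := (Re z + Re w, Im z + Im w).
Definition Copp (z : Cplx) : Cplx := (- Re z, - Im z).
Definition Csub (z w : Cplx) : Cplx := Cadd z (Copp w).
Definition Cmul (z w : Cplx) : Cplx :=
  (Re z * Re w - Im z * Im w, Re z * Im w + Im z * Re w).
Definition Cnorm (z : Cplx) : R := sqrt (Re z * Re z + Im z * Im z).
Definition Cinv (z : Cplx) : Cplx :=
  (Re z / (Re z * Re z + Im z * Im z), - Im z / (Re z * Re z + Im z * Im z)).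
Definition Cdiv (z w : Cplx) : Cplx := Cmul z (Cinv w).

Declare Scope C_scope.
Delimit Scope C_scope with C.
Infix "+" := Cadd : C_scope.
Infix "-" := Csub : C_scope.
Infix "*" := Cmul : C_scope.
Infix "/" := Cdiv : C_scope.
Notation "- z" := (Copp z) : C_scope.

(* s ^ a for real s > 0 and complex a, principal branch: exp (a * ln s). *)
Definition Cpow_pos (s : R) (a : Cplx) : Cplx :=
  (exp (Re a * ln s) * cos (Im a * ln s), exp (Re a * ln s) * sin (Im a * ln s)).

Definition Cderiv (f : R -> Cplx) (s : R) (l : Cplx) : Prop :=
  derivable_pt_lim (fun r => Re (f r)) s (Re l) /\
  derivable_pt_lim (fun r => Im (f r)) s (Im l).

Definition Csmooth_pos (f : R -> Cplx) : Prop :=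
  exists F : nat -> R -> Cplx,
    (forall s, 0 < s -> F O s = f s) /\
    (forall n s, 0 < s -> Cderiv (F n) s (F (S n) s)).

Definition Clim0 (f : R -> Cplx) (l : Cplx) : Prop :=
  forall eps, 0 < eps -> exists delta, 0 < delta /\
    forall s, 0 < s < delta -> Cnorm (Csub (f s) l) < eps.

(* Main.v *)
Require Import Defs.
From Stdlib Require Import Reals Lra Nsatz.
Open Scope R_scope.

Lemma Cext (z w : Cplx) : fst z = fst w -> snd z = snd w -> z = w.
Proof. destruct z, w; simpl; intros; subst; reflexivity. Qed.

Ltac cre := repeat match goal with z : Cplx |- _ => destruct z end;
  apply Cext; unfold Cadd, Cmul, Copp, Csub, RtoC, Re, Im; simpl.

Lemma Csth : Setoid_Theory Cplx (@eq Cplx).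
constructor;red;intros;subst;trivial.
Qed.

#[global] Instance Cops: (@Ring_ops Cplx (RtoC 0) (RtoC 1) Cadd Cmul Csub Copp (@eq Cplx)).
Defined.

#[global] Instance Cri : (Ring (Ro:=Cops)).
constructor;
try (try apply Csth;
   try (unfold respectful, Proper; unfold equality; unfold eq_notation in *;
  intros; try rewrite H; try rewrite H0; reflexivity));
 unfold equality, eq_notation, addition, add_notation, multiplication, mul_notation,
   zero, zero_notation, one, one_notation, opposite, opp_notation, subtraction, sub_notation;
 simpl; intros; cre; ring.
Defined.

#[global] Instance Ccri: (Cring (Rr:=Cri)).
red. intros; cre; ring. Defined.

Lemma Cinteg (x y : Cplx) : Cmul x y = RtoC 0 -> x = RtoC 0 \/ y = RtoC 0.
Proof.
  destruct x as [a b], y as [c d]; unfold Cmul, RtoC, Re, Im; simpl; intro H.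
  injection H as H1 H2.
  destruct (Req_dec a 0), (Req_dec b 0); subst.
  - left; reflexivity.
  - right. apply Cext; simpl; nra.
  - right. apply Cext; simpl; nra.
  - right. assert (a*a+b*b > 0) by nra. apply Cext; simpl; nra.
Qed.

Lemma C10 : RtoC 1 <> RtoC 0.
Proof. unfold RtoC; intro H; injection H; lra. Qed.

#[global] Instance Cdi : (Integral_domain (Rcr:=Ccri)).
constructor.
- exact Cinteg.
- exact C10.
Defined.

Open Scope C_scope.
Open Scope R_scope.
Lemma dpl_conv f x l l' : derivable_pt_lim f x l -> l = l' -> derivable_pt_lim f x l'.
Proof. intros H ->; exact H. Qed.

Lemma dpl_ext_pos f g x l : 0 < x -> (forall y, 0 < y -> f y = g y) ->
  derivable_pt_lim g x l -> derivable_pt_lim f x l.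
Proof.
  intros Hx Hfg H eps Heps. destruct (H eps Heps) as [d Hd].
  assert (Hm : 0 < Rmin d x) by (apply Rmin_pos; [apply cond_pos|lra]).
  exists (mkposreal _ Hm). intros h Hh Hh2. simpl in Hh2.
  assert (Habs: Rabs h < d) by (eapply Rlt_le_trans; [exact Hh2| apply Rmin_l]).
  assert (Habs2: Rabs h < x) by (eapply Rlt_le_trans; [exact Hh2| apply Rmin_r]).
  rewrite (Hfg (x+h)), (Hfg x) by (try lra; apply Rabs_def2 in Habs2; lra).
  apply Hd; auto.
Qed.

Lemma Cderiv_ext_pos f g x l : 0 < x -> (forall y, 0 < y -> f y = g y) ->
  Cderiv g x l -> Cderiv f x l.
Proof.
  intros Hx Hfg [H1 H2]; split; eapply dpl_ext_pos; eauto;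
  intros y Hy; simpl; rewrite Hfg; auto.
Qed.

Lemma Cderiv_conv f x l l' : Cderiv f x l -> l = l' -> Cderiv f x l'.
Proof. intros H ->; exact H. Qed.

Open Scope C_scope.

Lemma Cderiv_add f g x df dg : Cderiv f x df -> Cderiv g x dg ->
  Cderiv (fun r => f r + g r) x (df + dg).
Proof.
  intros [f1 f2] [g1 g2]; split.
  - exact (derivable_pt_lim_plus _ _ _ _ _ f1 g1).
  - exact (derivable_pt_lim_plus _ _ _ _ _ f2 g2).
Qed.

Lemma Cderiv_opp f x df : Cderiv f x df -> Cderiv (fun r => - f r) x (- df).
Proof.
  intros [f1 f2]; split.
  - exact (derivable_pt_lim_opp _ _ _ f1).
  - exact (derivable_pt_lim_opp _ _ _ f2).
Qed.

Lemma Cderiv_sub f g x df dg : Cderiv f x df -> Cderiv g x dg ->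
  Cderiv (fun r => f r - g r) x (df - dg).
Proof. intros; apply Cderiv_add; auto; apply Cderiv_opp; auto. Qed.

Lemma Cderiv_mul f g x df dg : Cderiv f x df -> Cderiv g x dg ->
  Cderiv (fun r => f r * g r) x (df * g x + f x * dg).
Proof.
  intros [f1 f2] [g1 g2]; split.
  - eapply dpl_conv.
    + exact (derivable_pt_lim_minus _ _ _ _ _ (derivable_pt_lim_mult _ _ _ _ _ f1 g1)
               (derivable_pt_lim_mult _ _ _ _ _ f2 g2)).
    + unfold Re, Im, Cmul, Cadd; simpl; unfold Re, Im; ring.
  - eapply dpl_conv.
    + exact (derivable_pt_lim_plus _ _ _ _ _ (derivable_pt_lim_mult _ _ _ _ _ f1 g2)
               (derivable_pt_lim_mult _ _ _ _ _ f2 g1)).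
    + unfold Re, Im, Cmul, Cadd; simpl; unfold Re, Im; ring.
Qed.

Lemma Cderiv_const (c : Cplx) x : Cderiv (fun _ => c) x (RtoC 0).
Proof. split; apply derivable_pt_lim_const. Qed.

Lemma Cderiv_RtoC x : Cderiv (fun r => RtoC r) x (RtoC 1).
Proof. split; [apply derivable_pt_lim_id | apply derivable_pt_lim_const]. Qed.

Lemma Cderiv_div4 f x l : Cderiv f (x / 4)%R l ->
  Cderiv (fun t => f (t / 4)%R) x (RtoC (1/4) * l).
Proof.
  assert (Hd : derivable_pt_lim (fun t => t / 4)%R x (1/4)%R).
  { eapply dpl_conv. apply derivable_pt_lim_div_scal, derivable_pt_lim_id. reflexivity. }
  intros [f1 f2]; split.
  - eapply dpl_conv. exact (derivable_pt_lim_comp _ _ _ _ _ Hd f1).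
    unfold Re, Im, Cmul, RtoC; simpl; unfold Re, Im; simpl; ring.
  - eapply dpl_conv. exact (derivable_pt_lim_comp _ _ _ _ _ Hd f2).
    unfold Re, Im, Cmul, RtoC; simpl; unfold Re, Im; simpl; ring.
Qed.

Lemma Cderiv_inv f x df : f x <> RtoC 0 -> Cderiv f x df ->
  Cderiv (fun r => Cinv (f r)) x (- (df * Cinv (f x) * Cinv (f x))).
Proof.
  intros Hnz [f1 f2].
  destruct (f x) as [a b] eqn:Ef.
  assert (HD : (a * a + b * b <> 0)%R).
  { intro HD. apply Hnz. apply Cext; simpl; nra. }
  pose proof (derivable_pt_lim_plus _ _ _ _ _ (derivable_pt_lim_mult _ _ _ _ _ f1 f1)
               (derivable_pt_lim_mult _ _ _ _ _ f2 f2)) as HDd.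
  split.
  - eapply dpl_conv.
    + apply (derivable_pt_lim_div _ _ _ _ _ f1 HDd).
      unfold plus_fct, mult_fct; unfold Re, Im; rewrite Ef; simpl; exact HD.
    + unfold plus_fct, mult_fct, Re, Im, Cinv, Cmul, Copp, Rsqr; rewrite Ef; simpl.
      destruct df as [c d]; simpl. field. exact HD.
  - eapply dpl_conv.
    + apply (derivable_pt_lim_div _ _ _ _ _ (derivable_pt_lim_opp _ _ _ f2) HDd).
      unfold plus_fct, mult_fct; unfold Re, Im; rewrite Ef; simpl; exact HD.
    + unfold plus_fct, mult_fct, opp_fct, Re, Im, Cinv, Cmul, Copp, Rsqr; rewrite Ef; simpl.
      destruct df as [c d]; simpl. field. exact HD.
Qed.

Lemma Cderiv_cpow (a : Cplx) s : 0 < s ->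
  Cderiv (fun r => Cpow_pos r a) s (a * Cpow_pos s a * RtoC (/ s)%R).
Proof.
  intros Hs. destruct a as [A B].
  assert (HlA : derivable_pt_lim (fun r => A * ln r)%R s (A * / s)%R).
  { apply derivable_pt_lim_scal with (f := ln). apply derivable_pt_lim_ln; auto. }
  assert (HlB : derivable_pt_lim (fun r => B * ln r)%R s (B * / s)%R).
  { apply derivable_pt_lim_scal with (f := ln). apply derivable_pt_lim_ln; auto. }
  pose proof (derivable_pt_lim_comp _ _ _ _ _ HlA (derivable_pt_lim_exp _)) as He.
  pose proof (derivable_pt_lim_comp _ _ _ _ _ HlB (derivable_pt_lim_cos _)) as Hc.
  pose proof (derivable_pt_lim_comp _ _ _ _ _ HlB (derivable_pt_lim_sin _)) as Hsn.
  split.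
  - eapply dpl_conv. exact (derivable_pt_lim_mult _ _ _ _ _ He Hc).
    unfold Re, Im, Cmul, RtoC, Cpow_pos, comp; simpl; unfold Re, Im; simpl; ring.
  - eapply dpl_conv. exact (derivable_pt_lim_mult _ _ _ _ _ He Hsn).
    unfold Re, Im, Cmul, RtoC, Cpow_pos, comp; simpl; unfold Re, Im; simpl; ring.
Qed.

Lemma Cpow_mul s a b : Cpow_pos s a * Cpow_pos s b = Cpow_pos s (a + b).
Proof.
  destruct a as [A B], b as [C D]; unfold Cpow_pos, Cmul, Cadd, Re, Im; simpl.
  apply Cext; simpl.
  - rewrite Rmult_plus_distr_r, exp_plus, Rmult_plus_distr_r, cos_plus. ring.
  - rewrite Rmult_plus_distr_r, exp_plus, Rmult_plus_distr_r, sin_plus. ring.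
Qed.

Lemma Cpow_0 s : Cpow_pos s (RtoC 0) = RtoC 1.
Proof.
  unfold Cpow_pos, RtoC, Re, Im; simpl. rewrite !Rmult_0_l, exp_0, cos_0, sin_0.
  apply Cext; simpl; ring.
Qed.
Open Scope R_scope.
Lemma dpl0_const (g : R -> R) : (forall y, 0 < y -> derivable_pt_lim g y 0) ->
  forall a b, 0 < a -> 0 < b -> g a = g b.
Proof.
  intros H a b Ha Hb.
  destruct (Rtotal_order a b) as [Hab|[Hab|Hab]].
  - destruct (MVT_cor2 g (fun _ => 0) a b Hab) as [c [Hc _]].
    { intros c Hc; apply H; lra. }
    lra.
  - subst; reflexivity.
  - destruct (MVT_cor2 g (fun _ => 0) b a Hab) as [c [Hc _]].
    { intros c Hc; apply H; lra. }
    lra.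
Qed.

Lemma Cconst f : (forall y, 0 < y -> Cderiv f y (RtoC 0)) ->
  forall a b, 0 < a -> 0 < b -> f a = f b.
Proof.
  intros H a b Ha Hb. apply Cext.
  - apply (dpl0_const (fun r => Re (f r))); auto. intros y Hy; apply (H y Hy).
  - apply (dpl0_const (fun r => Im (f r))); auto. intros y Hy; apply (H y Hy).
Qed.

Lemma Cnorm_small (z : Cplx) : (forall eps, 0 < eps -> Cnorm z < eps) -> z = RtoC 0.
Proof.
  intros H. destruct z as [a b]. unfold Cnorm, Re, Im in H; simpl in H.
  assert (Hs : sqrt (a * a + b * b) = 0).
  { destruct (Req_dec (sqrt (a*a+b*b)) 0) as [E|E]; auto.
    pose proof (sqrt_pos (a*a+b*b)).
    specialize (H (sqrt (a*a+b*b)) ltac:(lra)). lra. }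
  apply sqrt_eq_0 in Hs; [|nra].
  apply Cext; unfold RtoC; simpl; nra.
Qed.

Lemma Cconst_lim f l : (forall y, 0 < y -> Cderiv f y (RtoC 0)) -> Clim0 f l ->
  forall s, 0 < s -> f s = l.
Proof.
  intros H Hl s Hs.
  assert (E : Csub (f s) l = RtoC 0).
  { apply Cnorm_small. intros eps Heps.
    destruct (Hl eps Heps) as [d [Hd Hd2]].
    set (s' := Rmin s d / 2).
    assert (0 < Rmin s d) by (apply Rmin_pos; lra).
    assert (Rmin s d <= d) by apply Rmin_r.
    rewrite (Cconst f H s s'); auto; unfold s'; try lra.
    apply Hd2; lra. }
  destruct (f s), l; unfold Csub, Cadd, Copp, RtoC, Re, Im in E; simpl in E.
  injection E as E1 E2. apply Cext; simpl; lra.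
Qed.

Definition Rl0 (g : R -> R) (a : R) := limit1_in g (fun x => 0 < x) a 0.

Lemma Rl0_iff g a : Rl0 g a <-> forall eps, 0 < eps -> exists d, 0 < d /\
   forall s, 0 < s < d -> Rabs (g s - a) < eps.
Proof.
  unfold Rl0, limit1_in, limit_in; simpl; unfold Rdist. split.
  - intros H eps He. destruct (H eps He) as [d [Hd H2]]. exists d; split; auto.
    intros s Hs. apply H2. split; [lra|]. rewrite Rminus_0_r, Rabs_right; lra.
  - intros H eps He. destruct (H eps He) as [d [Hd H2]]. exists d; split; auto.
    intros s [Hs1 Hs2]. apply H2. rewrite Rminus_0_r, Rabs_right in Hs2; lra.
Qed.

Lemma Cnorm_ge (z : Cplx) : Rabs (Re z) <= Cnorm z /\ Rabs (Im z) <= Cnorm z.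
Proof.
  unfold Cnorm; destruct z as [a b]; unfold Re, Im; simpl. split.
  - rewrite <- sqrt_Rsqr_abs. apply sqrt_le_1_alt. unfold Rsqr; nra.
  - rewrite <- sqrt_Rsqr_abs. apply sqrt_le_1_alt. unfold Rsqr; nra.
Qed.

Lemma Cnorm_le (z : Cplx) : Cnorm z <= Rabs (Re z) + Rabs (Im z).
Proof.
  unfold Cnorm; destruct z as [a b]; unfold Re, Im; simpl.
  rewrite <- (sqrt_Rsqr (Rabs a + Rabs b)) by (pose proof (Rabs_pos a); pose proof (Rabs_pos b); lra).
  apply sqrt_le_1_alt. unfold Rsqr.
  pose proof (Rabs_pos a); pose proof (Rabs_pos b).
  assert (a * a = Rabs a * Rabs a) by (rewrite <- Rabs_mult; rewrite Rabs_right; nra).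
  assert (b * b = Rabs b * Rabs b) by (rewrite <- Rabs_mult; rewrite Rabs_right; nra).
  nra.
Qed.

Lemma Clim0_iff f l : Clim0 f l <-> Rl0 (fun s => Re (f s)) (Re l) /\ Rl0 (fun s => Im (f s)) (Im l).
Proof.
  rewrite !Rl0_iff. unfold Clim0. split.
  - intros H; split; intros eps He; destruct (H eps He) as [d [Hd H2]]; exists d; split; auto;
      intros s Hs; specialize (H2 s Hs); pose proof (Cnorm_ge (Csub (f s) l)) as [A B];
      unfold Csub, Cadd, Copp, Re, Im in *; simpl in *; unfold Rminus in *; lra.
  - intros [H1 H2] eps He.
    destruct (H1 (eps/2) ltac:(lra)) as [d1 [Hd1 K1]].
    destruct (H2 (eps/2) ltac:(lra)) as [d2 [Hd2 K2]].
    exists (Rmin d1 d2); split; [apply Rmin_pos; auto|].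
    intros s Hs. pose proof (Rmin_l d1 d2); pose proof (Rmin_r d1 d2).
    specialize (K1 s ltac:(lra)); specialize (K2 s ltac:(lra)).
    pose proof (Cnorm_le (Csub (f s) l)).
    unfold Csub, Cadd, Copp, Re, Im in *; simpl in *; unfold Rminus in *; lra.
Qed.

Open Scope C_scope.

Lemma Clim0_add f g a b : Clim0 f a -> Clim0 g b -> Clim0 (fun s => f s + g s) (a + b).
Proof.
  rewrite !Clim0_iff; intros [A1 A2] [B1 B2]; split.
  - exact (limit_plus _ _ _ _ _ _ A1 B1).
  - exact (limit_plus _ _ _ _ _ _ A2 B2).
Qed.

Lemma Clim0_opp f a : Clim0 f a -> Clim0 (fun s => - f s) (- a).
Proof.
  rewrite !Clim0_iff; intros [A1 A2]; split.
  - exact (limit_Ropp _ _ _ _ A1).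
  - exact (limit_Ropp _ _ _ _ A2).
Qed.

Lemma Clim0_sub f g a b : Clim0 f a -> Clim0 g b -> Clim0 (fun s => f s - g s) (a - b).
Proof. intros; apply Clim0_add; auto; apply Clim0_opp; auto. Qed.

Lemma Clim0_mul f g a b : Clim0 f a -> Clim0 g b -> Clim0 (fun s => f s * g s) (a * b).
Proof.
  rewrite !Clim0_iff; intros [A1 A2] [B1 B2]; split.
  - exact (limit_minus _ _ _ _ _ _ (limit_mul _ _ _ _ _ _ A1 B1) (limit_mul _ _ _ _ _ _ A2 B2)).
  - exact (limit_plus _ _ _ _ _ _ (limit_mul _ _ _ _ _ _ A1 B2) (limit_mul _ _ _ _ _ _ A2 B1)).
Qed.

Lemma Clim0_const (c : Cplx) : Clim0 (fun _ => c) c.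
Proof.
  rewrite Clim0_iff; split; apply (limit_free (fun _ => _) _ 0 0).
Qed.

Lemma Clim0_id : Clim0 (fun s => RtoC s) (RtoC 0).
Proof.
  rewrite Clim0_iff; split.
  - apply lim_x.
  - apply (limit_free (fun _ => 0%R) _ 0 0).
Qed.

Lemma Clim0_conv f a b : Clim0 f a -> a = b -> Clim0 f b.
Proof. intros H ->; exact H. Qed.

Lemma RtoC_inv y : y <> 0%R -> RtoC y * RtoC (/ y) = RtoC 1.
Proof. intros; cre; field; auto. Qed.

Lemma Cinv_r z : z <> RtoC 0 -> z * Cinv z = RtoC 1.
Proof.
  intros Hz. destruct z as [a b].
  assert (HD : (a * a + b * b <> 0)%R).
  { intro HD. apply Hz. apply Cext; simpl; nra. }
  apply Cext; unfold Cmul, Cinv, Re, Im, RtoC; simpl; field; auto.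
Qed.

Lemma Ci_sq : Ci * Ci = - RtoC 1.
Proof. cre; unfold Ci; simpl; ring. Qed.

Ltac cder := first [ eassumption | apply Cderiv_RtoC | eapply Cderiv_add; cder
  | eapply Cderiv_sub; cder | eapply Cderiv_mul; cder | eapply Cderiv_opp; cder
  | apply Cderiv_const ].

Ltac climt := first [ eassumption | apply Clim0_id | eapply Clim0_add; climt
  | eapply Clim0_sub; climt | eapply Clim0_mul; climt | eapply Clim0_opp; climt
  | apply Clim0_const ].

Lemma Cderiv_cpow4 (a : Cplx) x : (0 < x)%R ->
  Cderiv (fun y => Cpow_pos (y / 4)%R a) x (RtoC (1/4) * (a * Cpow_pos (x/4)%R a * RtoC (/ (x/4))%R)).
Proof.
  intros Hx. apply (Cderiv_div4 (fun r => Cpow_pos r a)). apply Cderiv_cpow. lra.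
Qed.

Ltac cder2 := first [ eassumption | apply Cderiv_RtoC | apply Cderiv_cpow4; lra
  | (apply Cderiv_div4; eassumption)
  | eapply Cderiv_add; cder2
  | eapply Cderiv_sub; cder2 | eapply Cderiv_mul; cder2 | eapply Cderiv_opp; cder2
  | apply Cderiv_const ].

Ltac nsatz' := nsatz; try (cbn; let HH := fresh "HH" in intro HH;
  apply (f_equal fst) in HH; cbn in HH; lra).
Open Scope R_scope.
Theorem mainTheorem5
  (nu : Cplx)
  (x0 x1 y0 y1 xi0 xi1 eta0 eta1 : R -> Cplx)
  (x0' x1' y0' y1' xi0' xi1' eta0' eta1' : R -> Cplx)
  (* smoothness on (0, oo) *)
  (Hsm : Csmooth_pos x0 /\ Csmooth_pos x1 /\ Csmooth_pos y0 /\ Csmooth_pos y1 /\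
         Csmooth_pos xi0 /\ Csmooth_pos xi1 /\ Csmooth_pos eta0 /\ Csmooth_pos eta1)
  (* derivatives *)
  (Hd : forall s, 0 < s ->
     Cderiv x0 s (x0' s) /\ Cderiv x1 s (x1' s) /\ Cderiv y0 s (y0' s) /\
     Cderiv y1 s (y1' s) /\ Cderiv xi0 s (xi0' s) /\ Cderiv xi1 s (xi1' s) /\
     Cderiv eta0 s (eta0' s) /\ Cderiv eta1 s (eta1' s))
  (* the system, with nu_0 = 0, nu_1 = nu *)
  (Hsys : forall s, 0 < s ->
     (RtoC s * x0' s = - (eta0 s * x0 s) - x1 s)%C /\
     (RtoC s * x1' s = - (eta1 s * x0 s) + RtoC s * x0 s + xi0 s * x0 s
                         + xi1 s * x1 s)%C /\
     (RtoC s * y1' s = - (xi1 s * y1 s) + y0 s)%C /\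
     (RtoC s * y0' s = - (xi0 s * y1 s) - RtoC s * y1 s + eta0 s * y0 s
                         + eta1 s * y1 s)%C /\
     xi0' s = (x0 s * y0 s)%C /\
     xi1' s = (x0 s * y1 s)%C /\
     eta0' s = (x0 s * y1 s)%C /\
     eta1' s = (x1 s * y1 s)%C)
  (* boundary behaviour as s -> 0+, with e1 = 0 + nu, e2 = 0 * nu *)
  (Hb : Clim0 xi0 (RtoC 0 * nu)%C /\ Clim0 xi1 (- (RtoC 0 + nu))%C /\
        Clim0 eta0 (RtoC 0) /\ Clim0 eta1 (RtoC 0) /\
        Clim0 (fun s => x0 s * y0 s)%C (RtoC 0) /\
        Clim0 (fun s => x0 s * y1 s)%C (RtoC 0) /\
        Clim0 (fun s => x1 s * y0 s)%C (RtoC 0) /\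
        Clim0 (fun s => x1 s * y1 s)%C (RtoC 0))
  (* extra hypotheses *)
  (Hx0 : forall s, 0 < s -> x0 s <> RtoC 0)
  (Hlim : Clim0 (fun s => Cpow_pos s (- nu) * y1 s / x0 s)%C (RtoC 1))
  (* the functions q, p, u, v of t = 4 s *)
  (q p u v : R -> Cplx)
  (Hq : forall s, 0 < s ->
     x0 s = (Ci * Cpow_pos s (- (nu * RtoC (1/2))) * q ((4 * s)%R))%C)
  (Hp : forall s, 0 < s ->
     y0 s = (Ci * Cpow_pos s (nu * RtoC (1/2))
              * (p ((4 * s)%R) - nu * RtoC (1/2) * q ((4 * s)%R)))%C)
  (Hu : forall s, 0 < s -> eta0 s = (- (RtoC (1/4) * u ((4 * s)%R)))%C)
  (Hv : forall s, 0 < s ->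
     xi0 s = (RtoC (1/4) * (- v ((4 * s)%R) + nu * RtoC (1/2) * u ((4 * s)%R)))%C) :
  forall t, 0 < t ->
    (RtoC t * q t * q t
       = RtoC (1/4) * u t * u t + u t + RtoC 2 * v t)%C /\
    (u t = RtoC 4 * p t * p t - (nu * nu - RtoC t + RtoC 2 * v t) * q t * q t
           + RtoC 2 * q t * p t * u t)%C /\
    exists dq dp du dv : Cplx,
      Cderiv q t dq /\ Cderiv p t dp /\ Cderiv u t du /\ Cderiv v t dv /\
      du = (q t * q t)%C /\
      dv = (q t * p t)%C /\
      (RtoC t * dq = p t + RtoC (1/4) * q t * u t)%C /\
      (RtoC t * dp = (RtoC (1/4) * nu * nu - RtoC (1/4) * RtoC t
                      + RtoC (1/2) * v t) * q t - RtoC (1/4) * p t * u t)%C.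
Proof.
  Open Scope C_scope.
  intros t Ht.
  destruct Hb as [Lxi0 [Lxi1 [Leta0 [Leta1 [LA [LB [LC LD]]]]]]].
  assert (HI : forall s, (0 < s)%R -> x0 s * y0 s + x1 s * y1 s = RtoC 0).
  { apply (Cconst_lim (fun s => x0 s * y0 s + x1 s * y1 s)).
    - intros y Hy. destruct (Hd y Hy) as [d0 [d1 [d2 [d3 [d4 [d5 [d6 d7]]]]]]].
      destruct (Hsys y Hy) as [e0 [e1 [e2 [e3 [e4 [e5 [e6 e7]]]]]]].
      pose proof (RtoC_inv y ltac:(lra)) as Hinv.
      eapply Cderiv_conv. { cder. }
      clear -e0 e1 e2 e3 Hinv. nsatz'.
    - eapply Clim0_conv. { climt. } cre; ring. }
  assert (HK : forall s, (0 < s)%R -> xi1 s - eta0 s = - (RtoC 0 + nu)).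
  { apply (Cconst_lim (fun s => xi1 s - eta0 s)).
    - intros y Hy. destruct (Hd y Hy) as [d0 [d1 [d2 [d3 [d4 [d5 [d6 d7]]]]]]].
      destruct (Hsys y Hy) as [e0 [e1 [e2 [e3 [e4 [e5 [e6 e7]]]]]]].
      eapply Cderiv_conv. { cder. }
      clear -e5 e6. nsatz'.
    - eapply Clim0_conv. { climt. } cre; ring. }
  assert (HL : forall s, (0 < s)%R -> eta1 s + xi0 s = RtoC 0).
  { apply (Cconst_lim (fun s => eta1 s + xi0 s)).
    - intros y Hy. destruct (Hd y Hy) as [d0 [d1 [d2 [d3 [d4 [d5 [d6 d7]]]]]]].
      destruct (Hsys y Hy) as [e0 [e1 [e2 [e3 [e4 [e5 [e6 e7]]]]]]].
      pose proof (HI y Hy) as HIy.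
      eapply Cderiv_conv. { cder. }
      clear -e4 e7 HIy. nsatz'.
    - eapply Clim0_conv. { climt. } cre; ring. }
  assert (HR : forall s, (0 < s)%R -> Cpow_pos s (- nu) * y1 s * Cinv (x0 s) = RtoC 1).
  { apply (Cconst_lim (fun s => Cpow_pos s (- nu) * y1 s * Cinv (x0 s))).
    - intros y Hy. destruct (Hd y Hy) as [d0 [d1 [d2 [d3 [d4 [d5 [d6 d7]]]]]]].
      destruct (Hsys y Hy) as [e0 [e1 [e2 [e3 [e4 [e5 [e6 e7]]]]]]].
      pose proof (HI y Hy) as HIy. pose proof (HK y Hy) as HKy.
      pose proof (RtoC_inv y ltac:(lra)) as Hinv.
      pose proof (Cinv_r _ (Hx0 y Hy)) as Hix.
      eapply Cderiv_conv.
      { eapply Cderiv_mul; [eapply Cderiv_mul; [apply Cderiv_cpow; auto| eassumption]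
        | apply Cderiv_inv; [apply Hx0; auto| eassumption]]. }
      clear -e0 e2 HIy HKy Hinv Hix. nsatz'.
    - exact Hlim. }
  assert (HJ : forall s, (0 < s)%R -> RtoC s * (x0 s * y1 s) + eta0 s * eta0 s - eta0 s
             - (xi0 s + xi0 s) - nu * eta0 s = RtoC 0).
  { apply (Cconst_lim (fun s => RtoC s * (x0 s * y1 s) + eta0 s * eta0 s - eta0 s
             - (xi0 s + xi0 s) - nu * eta0 s)).
    - intros y Hy. destruct (Hd y Hy) as [d0 [d1 [d2 [d3 [d4 [d5 [d6 d7]]]]]]].
      destruct (Hsys y Hy) as [e0 [e1 [e2 [e3 [e4 [e5 [e6 e7]]]]]]].
      pose proof (HI y Hy) as HIy. pose proof (HK y Hy) as HKy.
      pose proof (RtoC_inv y ltac:(lra)) as Hinv.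
      eapply Cderiv_conv. { cder. }
      clear -e0 e2 e4 e6 HIy HKy Hinv. nsatz'.
    - eapply Clim0_conv. { climt. } cre; ring. }
  assert (HE : forall s, (0 < s)%R -> eta0 s + x1 s * y0 s - nu * (x0 s * y0 s)
      - RtoC s * (x0 s * y1 s) - (xi0 s + xi0 s) * (x0 s * y1 s)
      + (x0 s * y0 s + x0 s * y0 s) * eta0 s = RtoC 0).
  { apply (Cconst_lim (fun s => eta0 s + x1 s * y0 s - nu * (x0 s * y0 s)
      - RtoC s * (x0 s * y1 s) - (xi0 s + xi0 s) * (x0 s * y1 s)
      + (x0 s * y0 s + x0 s * y0 s) * eta0 s)).
    - intros y Hy. destruct (Hd y Hy) as [d0 [d1 [d2 [d3 [d4 [d5 [d6 d7]]]]]]].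
      destruct (Hsys y Hy) as [e0 [e1 [e2 [e3 [e4 [e5 [e6 e7]]]]]]].
      pose proof (HI y Hy) as HIy. pose proof (HK y Hy) as HKy. pose proof (HL y Hy) as HLy.
      pose proof (RtoC_inv y ltac:(lra)) as Hinv.
      eapply Cderiv_conv. { cder. }
      clear -e0 e1 e2 e3 e4 e6 HIy HKy HLy Hinv. nsatz'.
    - eapply Clim0_conv. { climt. } cre; ring. }
  set (s := (t/4)%R). assert (Hs : (0 < s)%R) by (unfold s; lra).
  assert (E4 : (4 * s)%R = t) by (unfold s; field).
  set (a := Cpow_pos s (nu * RtoC (1/2))).
  set (b := Cpow_pos s (- (nu * RtoC (1/2)))).
  assert (Hab : forall y, Cpow_pos y (nu * RtoC (1/2)) * Cpow_pos y (- (nu * RtoC (1/2))) = RtoC 1).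
  { intros y. rewrite Cpow_mul. replace (nu * RtoC (1 / 2) + - (nu * RtoC (1 / 2))) with (RtoC 0)
      by (cre; ring). apply Cpow_0. }
  assert (Hbb : Cpow_pos s (- nu) = b * b).
  { unfold b. rewrite Cpow_mul. f_equal. cre; field. }
  pose proof Ci_sq as Hi.
  assert (H2 : RtoC 2 = RtoC 1 + RtoC 1) by (cre; ring).
  assert (H4 : RtoC 4 = RtoC 1 + RtoC 1 + RtoC 1 + RtoC 1) by (cre; ring).
  assert (H14 : RtoC (1/4) * RtoC 4 = RtoC 1) by (cre; field).
  assert (H12 : RtoC (1/2) * RtoC 2 = RtoC 1) by (cre; field).
  assert (Ht4 : RtoC t = RtoC 4 * RtoC s) by (unfold s; cre; field).
  assert (Hqq : forall y, (0 < y)%R -> q y = - Ci * (Cpow_pos (y/4)%R (nu * RtoC (1/2)) * x0 (y/4)%R)).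
  { intros y Hy. pose proof (Hq (y/4)%R ltac:(lra)) as K.
    replace (4 * (y/4))%R with y in K by field. pose proof (Hab (y/4)%R) as Hab'.
    clear -K Hab' Hi. nsatz'. }
  assert (Hpp : forall y, (0 < y)%R -> p y = - Ci * (Cpow_pos (y/4)%R (- (nu * RtoC (1/2))) * y0 (y/4)%R)
      + nu * RtoC (1/2) * q y).
  { intros y Hy. pose proof (Hp (y/4)%R ltac:(lra)) as K.
    replace (4 * (y/4))%R with y in K by field. pose proof (Hab (y/4)%R) as Hab'.
    clear -K Hab' Hi. nsatz'. }
  assert (Huu : forall y, (0 < y)%R -> u y = - (RtoC 4 * eta0 (y/4)%R)).
  { intros y Hy. pose proof (Hu (y/4)%R ltac:(lra)) as K.
    replace (4 * (y/4))%R with y in K by field.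
    clear -K H14. nsatz'. }
  assert (Hvv : forall y, (0 < y)%R -> v y = - (RtoC 4 * xi0 (y/4)%R) + nu * RtoC (1/2) * u y).
  { intros y Hy. pose proof (Hv (y/4)%R ltac:(lra)) as K. pose proof (Huu y Hy) as K2.
    replace (4 * (y/4))%R with y in K by field.
    clear -K K2 H14. nsatz'. }
  destruct (Hd s Hs) as [d0 [d1 [d2 [d3 [d4 [d5 [d6 d7]]]]]]].
  destruct (Hsys s Hs) as [e0 [e1 [e2 [e3 [e4 [e5 [e6 e7]]]]]]].
  evar (dq : Cplx). assert (HQ : Cderiv q t dq).
  { eapply Cderiv_ext_pos; [exact Ht | exact Hqq |]. cder2. }
  evar (dp : Cplx). assert (HP : Cderiv p t dp).
  { eapply Cderiv_ext_pos; [exact Ht | exact Hpp |]. cder2. }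
  evar (du : Cplx). assert (HU : Cderiv u t du).
  { eapply Cderiv_ext_pos; [exact Ht | exact Huu |]. cder2. }
  evar (dv : Cplx). assert (HV : Cderiv v t dv).
  { eapply Cderiv_ext_pos; [exact Ht | exact Hvv |]. cder2. }
  pose proof (Hq s Hs) as Kq. pose proof (Hp s Hs) as Kp.
  pose proof (Hu s Hs) as Ku. pose proof (Hv s Hs) as Kv. rewrite E4 in Kq, Kp, Ku, Kv.
  pose proof (Hab s) as Habs. fold a b in Habs.
  assert (Hy1 : y1 s = a * a * x0 s).
  { pose proof (HR s Hs) as K. rewrite Hbb in K. pose proof (Cinv_r _ (Hx0 s Hs)) as Hix.
    clear -K Hix Habs. nsatz'. }
  pose proof (HI s Hs) as HIs. pose proof (HK s Hs) as HKs. pose proof (HL s Hs) as HLs.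
  pose proof (HJ s Hs) as HJs. pose proof (HE s Hs) as HEs.
  pose proof (RtoC_inv s ltac:(lra)) as Hinv.
  clear Hd Hsys Hq Hp Hu Hv HI HK HL HJ HE HR Hqq Hpp Huu Hvv Hab Hlim Lxi0 Lxi1 Leta0 Leta1 LA LB LC LD Hsm.
  assert (Hx1 : x1 s = - (b * b * y0 s)).
  { pose proof (Cinv_r _ (Hx0 s Hs)) as Hix. clear -HIs Hy1 Hix Habs. nsatz'. }
  split; [| split].
  { clear -HJs Kq Ku Kv Hy1 Habs Hi H2 H4 H14 H12 Ht4. nsatz'. }
  { clear -HEs Hx1 Kq Kp Ku Kv Hy1 Habs Hi H2 H4 H14 H12 Ht4. nsatz'. }
  exists dq, dp, du, dv. split; [exact HQ|]. split; [exact HP|]. split; [exact HU|].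
  split; [exact HV|].
  subst dq dp du dv a b s. cbv beta.
  split; [| split; [| split]].
  - clear -e6 Hy1 Kq Habs Hi H14 H4. nsatz'.
  - clear -e4 e6 Hy1 Kq Kp Habs Hi H14 H4 H12 H2. nsatz'.
  - clear -e0 Hinv Hx1 Kq Kp Ku Hy1 Habs Hi Ht4 H14 H4 H12 H2. nsatz'.
  - clear -e0 e3 HLs Hinv Hx1 Kq Kp Ku Kv Hy1 Habs Hi Ht4 H14 H4 H12 H2. nsatz'.
Qed.
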